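(* Let $d\ge1$, $0<s_0<s_1$, $0<\alpha_0<\alpha_1$, $W=[s_0,s_1]\times[\alpha_0,\alpha_1]$ with interior $W^\circ$. Let $\varphi\in C^2(W^\circ,\mathbb{R})$ be non-negative and convex, with $\varphi(s,\alpha)\to\infty$ whenever $s\to s_0$, $s\to s_1$, $\alpha\to\alpha_0$ or $\alpha\to\alpha_1$, and strongly convex: there is $\theta>0$ with $\nabla^2\varphi(x)-\theta I$ positive semidefinite for all $x\in W^\circ$. For $g\in L^2_0(\mathbb{T}^d;\mathbb{C})$, $u_d\in L^2(\mathbb{T}^d;\mathbb{C})$ define $\mathcal{S}(s,\alpha)=\big(\frac{\alpha}{\alpha+|k|^{2s}}\hat g_k\big)_{k\in\mathbb{Z}^d}$ and $j(s,\alpha)=\frac{1}{2(2\pi)^d}\|\mathcal{S}(s,\alpha)-\widehat{\mathbf U}_d\|_{\ell^2}^2+\varphi(s,\alpha)$, where $\widehat{\mathbf U}_d=(\hat u_{d,k})_k$. Then, if $\|g\|_{L^2}$ and $\|u_d\|_{L^2}$ are sufficiently small, there exists a constant $\kappa>0$ such that $\nabla^2 j(s,\alpha)-\kappa I$ is positive semidefinite for all $(s,\alpha)\in W^\circ$.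
   Context: $\mathbb{T}^d=\mathbb{R}^d/(2\pi\mathbb{Z})^d$; $\hat u_k=\int_{\mathbb{T}^d}u\,e^{-ik\cdot x}dx$; convention $|0|^{2s}=0$; $L^2_0$ is the zero-mean subspace of $L^2$. ''Sufficiently small'' means: there is a threshold (depending on $W$, $d$ and $\theta$) such that the conclusion holds whenever both norms lie below it. *)

(* Defs.v *)
From Stdlib Require Import Reals Lra List ZArith.
From Coquelicot Require Import Coquelicot.
Import ListNotations.
Open Scope R_scope.

(* ---------- The lattice Z^d, represented by lists of integers of length d ---------- *)

Definition zrange (N : nat) : list Z :=
  map (fun i => (Z.of_nat i - Z.of_nat N)%Z) (seq 0 (2 * N + 1)).

Fixpoint boxes (d N : nat) : list (list Z) :=
  match d with
  | O => [nil]
  | S d' => flat_map (fun z => map (cons z) (boxes d' N)) (zrange N)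
  end.

Definition boxsum (d N : nat) (f : list Z -> R) : R :=
  fold_right Rplus 0 (map f (boxes d N)).

Definition l2sq (d : nat) (c : list Z -> C) : R :=
  real (Lim_seq (fun N => boxsum d N (fun k => (Cmod (c k)) ^ 2))).

Definition l2summable (d : nat) (c : list Z -> C) : Prop :=
  exists M : R, forall N : nat, boxsum d N (fun k => (Cmod (c k)) ^ 2) <= M.

(* L^2(T^d) norm of the function whose Fourier coefficients
   (hat u_k = \int u e^{-ik.x} dx) are c:  ||u||^2 = (2 pi)^{-d} sum |hat u_k|^2 *)
Definition L2norm (d : nat) (c : list Z -> C) : R :=
  sqrt (l2sq d c / (2 * PI) ^ d).

Definition normk2 (k : list Z) : R :=
  fold_right (fun z acc => (IZR z) ^ 2 + acc) 0 k.

(* |k|^{2s} = (|k|^2)^s, with the convention |0|^{2s} = 0 *)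
Definition kpow (k : list Z) (s : R) : R :=
  if Req_EM_T (normk2 k) 0 then 0 else Rpower (normk2 k) s.

Definition Ssol (g : list Z -> C) (s a : R) (k : list Z) : C :=
  Cmult (RtoC (a / (a + kpow k s))) (g k).

Definition jfun (d : nat) (g ud : list Z -> C) (phi : R -> R -> R) (s a : R) : R :=
  / (2 * (2 * PI) ^ d) * l2sq d (fun k => Cminus (Ssol g s a k) (ud k)) + phi s a.

Definition inW (s0 s1 a0 a1 s a : R) : Prop := s0 < s < s1 /\ a0 < a < a1.

Definition d1 (f : R -> R -> R) (s a : R) : R := Derive (fun x => f x a) s.
Definition d2 (f : R -> R -> R) (s a : R) : R := Derive (fun y => f s y) a.

Definition twice_diff_on (s0 s1 a0 a1 : R) (f : R -> R -> R) : Prop :=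
  forall s a, inW s0 s1 a0 a1 s a ->
    ex_derive (fun x => f x a) s /\ ex_derive (fun y => f s y) a /\
    ex_derive (fun x => d1 f x a) s /\ ex_derive (fun y => d1 f s y) a /\
    ex_derive (fun x => d2 f x a) s /\ ex_derive (fun y => d2 f s y) a.

Definition cont2 (h : R -> R -> R) (s a : R) : Prop :=
  continuous (fun p : R * R => h (fst p) (snd p)) (s, a).

Definition C2_on (s0 s1 a0 a1 : R) (f : R -> R -> R) : Prop :=
  twice_diff_on s0 s1 a0 a1 f /\
  forall s a, inW s0 s1 a0 a1 s a ->
    cont2 f s a /\ cont2 (d1 f) s a /\ cont2 (d2 f) s a /\
    cont2 (d1 (d1 f)) s a /\ cont2 (d2 (d1 f)) s a /\
    cont2 (d1 (d2 f)) s a /\ cont2 (d2 (d2 f)) s a.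

Definition hess_form (f : R -> R -> R) (s a v1 v2 : R) : R :=
  v1 * (d1 (d1 f) s a * v1 + d2 (d1 f) s a * v2)
  + v2 * (d1 (d2 f) s a * v1 + d2 (d2 f) s a * v2).

Definition hess_psd_shift (f : R -> R -> R) (c s a : R) : Prop :=
  forall v1 v2 : R, 0 <= hess_form f s a v1 v2 - c * (v1 ^ 2 + v2 ^ 2).

Definition convex_on (s0 s1 a0 a1 : R) (f : R -> R -> R) : Prop :=
  forall s a s' a' t, inW s0 s1 a0 a1 s a -> inW s0 s1 a0 a1 s' a' -> 0 <= t <= 1 ->
    f (t * s + (1 - t) * s') (t * a + (1 - t) * a')
      <= t * f s a + (1 - t) * f s' a'.

Definition blows_up_at_boundary (s0 s1 a0 a1 : R) (f : R -> R -> R) : Prop :=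
  forall M : R, exists eps : R, 0 < eps /\
    forall s a, inW s0 s1 a0 a1 s a ->
      (s < s0 + eps \/ s1 - eps < s \/ a < a0 + eps \/ a1 - eps < a) -> M < f s a.

(* Main.v *)
Require Import Defs.
From Stdlib Require Import Reals Lra Lia List ZArith.
From Coquelicot Require Import Coquelicot.
Import ListNotations.
Open Scope R_scope.

Definition lsum {A} (l : list A) (F : A -> R) : R := fold_right Rplus 0 (map F l).

Lemma lsum_app {A} (l1 l2 : list A) F : lsum (l1 ++ l2) F = lsum l1 F + lsum l2 F.
Proof. induction l1; simpl; unfold lsum in *; simpl; [lra|]. rewrite IHl1. lra. Qed.

Lemma lsum_map {A B} (l : list A) (h : A -> B) F : lsum (map h l) F = lsum l (fun x => F (h x)).
Proof. unfold lsum. rewrite map_map. reflexivity. Qed.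

Lemma lsum_flat_map {A B} (l : list A) (G : A -> list B) F :
  lsum (flat_map G l) F = lsum l (fun z => lsum (G z) F).
Proof. induction l; simpl. reflexivity. rewrite lsum_app, IHl. reflexivity. Qed.

Lemma lsum_plus {A} (l : list A) F G : lsum l (fun x => F x + G x) = lsum l F + lsum l G.
Proof. induction l; unfold lsum in *; simpl; [lra|]. rewrite IHl. lra. Qed.

Lemma lsum_scal {A} (l : list A) c F : lsum l (fun x => c * F x) = c * lsum l F.
Proof. induction l; unfold lsum in *; simpl; [lra|]. rewrite IHl. lra. Qed.

Lemma lsum_le {A} (l : list A) F G : (forall x, F x <= G x) -> lsum l F <= lsum l G.
Proof. intros H; induction l; unfold lsum in *; simpl; [lra|]. specialize (H a). lra. Qed.

Lemma lsum_ext {A} (l : list A) F G : (forall x, F x = G x) -> lsum l F = lsum l G.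
Proof. intros H; induction l; unfold lsum in *; simpl; [lra|]. rewrite H, IHl. lra. Qed.

Lemma lsum_nonneg {A} (l : list A) F : (forall x, 0 <= F x) -> 0 <= lsum l F.
Proof. intros H; induction l; unfold lsum in *; simpl; [lra|]. specialize (H a). lra. Qed.

Lemma lsum_abs {A} (l : list A) F : Rabs (lsum l F) <= lsum l (fun x => Rabs (F x)).
Proof. induction l; unfold lsum in *; simpl. rewrite Rabs_R0; lra.
  eapply Rle_trans. apply Rabs_triang. lra. Qed.

Lemma lsum_cons_nil {A} (x : A) l F : lsum (x :: l) F = F x + lsum l F.
Proof. reflexivity. Qed.
Lemma lsum_one {A} (x : A) F : lsum [x] F = F x.
Proof. unfold lsum; simpl; lra. Qed.

Lemma boxsum_lsum d N f : boxsum d N f = lsum (boxes d N) f.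
Proof. reflexivity. Qed.

Lemma boxsum_S d N f : boxsum (S d) N f = lsum (zrange N) (fun z => boxsum d N (fun k => f (z :: k))).
Proof. unfold boxsum. simpl. fold (lsum (flat_map (fun z => map (cons z) (boxes d N)) (zrange N)) f).
  rewrite lsum_flat_map. apply lsum_ext. intro z. rewrite lsum_map. reflexivity. Qed.

Lemma zrange_S N : zrange (S N) = ((- Z.of_nat (S N))%Z :: zrange N) ++ [Z.of_nat (S N)].
Proof.
  unfold zrange.
  replace (2 * S N + 1)%nat with (S (S (2 * N + 1))) by lia.
  rewrite seq_S. rewrite map_app. cbn [seq map]. f_equal.
  - f_equal. rewrite <- seq_shift. rewrite map_map. apply map_ext. intro i. lia.
  - f_equal. lia.
Qed.

Lemma boxsum_nonneg d N f : (forall k, 0 <= f k) -> 0 <= boxsum d N f.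
Proof. intros; apply lsum_nonneg; auto. Qed.

Lemma boxsum_mono d : forall N f, (forall k, 0 <= f k) -> boxsum d N f <= boxsum d (S N) f.
Proof.
  induction d; intros N f Hf.
  - unfold boxsum; simpl; lra.
  - rewrite !boxsum_S, zrange_S. rewrite lsum_app. rewrite lsum_cons_nil, lsum_one.
    set (a := (- Z.of_nat (S N))%Z). set (b := Z.of_nat (S N)).
    assert (0 <= boxsum d (S N) (fun k => f (a :: k))) by (apply boxsum_nonneg; auto).
    assert (0 <= boxsum d (S N) (fun k => f (b :: k))) by (apply boxsum_nonneg; auto).
    assert (lsum (zrange N) (fun z => boxsum d N (fun k => f (z :: k))) <=
            lsum (zrange N) (fun z => boxsum d (S N) (fun k => f (z :: k)))).
    { apply lsum_le. intro z. apply IHd. auto. }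
    lra.
Qed.

Lemma boxsum_plus d N F G : boxsum d N (fun k => F k + G k) = boxsum d N F + boxsum d N G.
Proof. apply lsum_plus. Qed.
Lemma boxsum_scal d N c F : boxsum d N (fun k => c * F k) = c * boxsum d N F.
Proof. apply lsum_scal. Qed.
Lemma boxsum_le d N F G : (forall k, F k <= G k) -> boxsum d N F <= boxsum d N G.
Proof. apply lsum_le. Qed.
Lemma boxsum_ext d N F G : (forall k, F k = G k) -> boxsum d N F = boxsum d N G.
Proof. apply lsum_ext. Qed.
Lemma boxsum_abs d N F : Rabs (boxsum d N F) <= boxsum d N (fun k => Rabs (F k)).
Proof. apply lsum_abs. Qed.

Lemma lsum_minus {A} (l : list A) F G : lsum l (fun x => F x - G x) = lsum l F - lsum l G.
Proof. induction l; unfold lsum in *; simpl; [lra|]. rewrite IHl. lra. Qed.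
Lemma boxsum_minus d N F G : boxsum d N (fun k => F k - G k) = boxsum d N F - boxsum d N G.
Proof. apply lsum_minus. Qed.
Definition ssum d (F : list Z -> R) : R := real (Lim_seq (fun N => boxsum d N F)).

Lemma ssum_of_lim d F (l : R) : is_lim_seq (fun N => boxsum d N F) l -> ssum d F = l.
Proof. intro H. unfold ssum. rewrite (is_lim_seq_unique _ _ H). reflexivity. Qed.

Lemma nonneg_lim d W M : (forall k, 0 <= W k) -> (forall N, boxsum d N W <= M) ->
  is_lim_seq (fun N => boxsum d N W) (ssum d W).
Proof.
  intros H1 H2. unfold ssum.
  assert (E : ex_finite_lim_seq (fun N => boxsum d N W)).
  { apply ex_finite_lim_seq_incr with M; auto. intro n. apply boxsum_mono; auto. }
  destruct E as [l Hl]. rewrite (is_lim_seq_unique _ _ Hl). exact Hl.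
Qed.

Lemma dom_lim d W M B F : 0 <= B -> (forall k, 0 <= W k) -> (forall N, boxsum d N W <= M) ->
  (forall k, Rabs (F k) <= B * W k) -> is_lim_seq (fun N => boxsum d N F) (ssum d F).
Proof.
  intros HB H1 H2 H3.
  set (P := fun k => F k + B * W k).
  assert (HP : forall k, 0 <= P k).
  { intro k; unfold P; specialize (H3 k); apply Rabs_le_between in H3; lra. }
  assert (HPM : forall N, boxsum d N P <= 2 * B * M).
  { intro N. apply Rle_trans with (boxsum d N (fun k => (2*B) * W k)).
    apply boxsum_le. intro k; unfold P; specialize (H3 k); apply Rabs_le_between in H3; lra.
    rewrite boxsum_scal. specialize (H2 N). nra. }
  assert (HQ : forall k, 0 <= B * W k) by (intro k; specialize (H1 k); nra).
  assert (HQM : forall N, boxsum d N (fun k => B * W k) <= B * M).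
  { intro N. rewrite boxsum_scal. specialize (H2 N). nra. }
  pose proof (nonneg_lim d P _ HP HPM) as LP.
  pose proof (nonneg_lim d _ _ HQ HQM) as LQ.
  pose proof (is_lim_seq_minus' _ _ _ _ LP LQ) as L.
  assert (Hl : is_lim_seq (fun N => boxsum d N F) (ssum d P - ssum d (fun k => B * W k))).
  { eapply is_lim_seq_ext; [|exact L]. intro n. simpl.
    rewrite <- (Rplus_0_r (boxsum d n F)).
    unfold P. rewrite boxsum_plus. lra. }
  rewrite (ssum_of_lim _ _ _ Hl). exact Hl.
Qed.

Lemma lim_abs_le (u v : nat -> R) (lu lv : R) : (forall n, Rabs (u n) <= v n) ->
  is_lim_seq u lu -> is_lim_seq v lv -> Rabs lu <= lv.
Proof.
  intros H Hu Hv.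
  assert (A : Rbar_le (Finite lu) (Finite lv)).
  { eapply is_lim_seq_le; [|exact Hu|exact Hv]. intro n. specialize (H n).
    apply Rabs_le_between in H. lra. }
  assert (Bb : Rbar_le (Finite (- lv)) (Finite lu)).
  { eapply is_lim_seq_le; [| |exact Hu]. 2:{ apply (is_lim_seq_opp v lv). exact Hv. }
    intro n. specialize (H n). apply Rabs_le_between in H. simpl. lra. }
  simpl in A, Bb. apply Rabs_le. lra.
Qed.

Lemma ssum_abs_le d W M B F : 0 <= B -> (forall k, 0 <= W k) -> (forall N, boxsum d N W <= M) ->
  (forall k, Rabs (F k) <= B * W k) -> Rabs (ssum d F) <= B * ssum d W.
Proof.
  intros HB H1 H2 H3.
  pose proof (dom_lim _ _ _ _ _ HB H1 H2 H3) as LF.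
  pose proof (nonneg_lim _ _ _ H1 H2) as LW.
  pose proof (is_lim_seq_scal_l _ B _ LW) as LBW. simpl in LBW.
  eapply lim_abs_le; [|exact LF|exact LBW].
  intro n. simpl. rewrite <- boxsum_scal. eapply Rle_trans. apply boxsum_abs. apply boxsum_le. auto.
Qed.

Lemma is_derive_cont f x l : is_derive f x l -> continuity_pt f x.
Proof. intro H. apply continuity_pt_filterlim. apply (ex_derive_continuous f x). exists l; exact H. Qed.

Lemma lipschitz (f df : R -> R) x y K :
  (forall z, Rmin x y <= z <= Rmax x y -> is_derive f z (df z)) ->
  (forall z, Rmin x y <= z <= Rmax x y -> Rabs (df z) <= K) ->
  Rabs (f y - f x) <= K * Rabs (y - x).
Proof.
  intros Hd Hb.
  destruct (MVT_gen f x y df) as [c [Hc Heq]].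
  - intros z Hz. apply Hd. lra.
  - intros z Hz. apply (is_derive_cont _ _ (df z)). apply Hd. exact Hz.
  - rewrite Heq, Rabs_mult. apply Rmult_le_compat_r. apply Rabs_pos. apply Hb. exact Hc.
Qed.

Lemma taylor2 (f f1 f2 : R -> R) lo hi x y K :
  lo < x < hi -> lo < y < hi ->
  (forall z, lo < z < hi -> is_derive f z (f1 z)) ->
  (forall z, lo < z < hi -> is_derive f1 z (f2 z)) ->
  (forall z, lo < z < hi -> Rabs (f2 z) <= K) ->
  Rabs (f y - f x - (y - x) * f1 x) <= K * (y - x) ^ 2.
Proof.
  intros Hx Hy H1 H2 Hb.
  assert (Hin : forall z, Rmin x y <= z <= Rmax x y -> lo < z < hi).
  { intros z Hz. destruct Hz as [Hz1 Hz2].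
    assert (Rmin x y >= Rmin x y) by lra.
    unfold Rmin, Rmax in *; destruct (Rle_dec x y); lra. }
  pose (phi := fun z => f z - z * f1 x).
  assert (E : f y - f x - (y - x) * f1 x = phi y - phi x) by (unfold phi; ring).
  rewrite E.
  replace (K * (y - x) ^ 2) with ((K * Rabs (y - x)) * Rabs (y - x)).
  2:{ rewrite Rmult_assoc, <- Rabs_mult. rewrite Rabs_right. ring. apply Rle_ge. exact (Rle_0_sqr (y - x)). }
  apply lipschitz with (df := fun z => f1 z - f1 x).
  - intros z Hz. unfold phi. 
    apply (is_derive_minus f (fun z => z * f1 x)). apply H1; auto.
    auto_derive; auto. ring.
  - intros z Hz.
    assert (Hzx : Rabs (f1 z - f1 x) <= K * Rabs (z - x)).
    { apply lipschitz with (df := f2).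
      - intros w Hw. apply H2. apply Hin. unfold Rmin, Rmax in *.
        destruct (Rle_dec x y), (Rle_dec x z); lra.
      - intros w Hw. apply Hb. apply Hin. unfold Rmin, Rmax in *.
        destruct (Rle_dec x y), (Rle_dec x z); lra. }
    eapply Rle_trans. exact Hzx.
    assert (0 <= K). { eapply Rle_trans. apply Rabs_pos. apply (Hb x). exact Hx. }
    apply Rmult_le_compat_l. auto.
    unfold Rmin, Rmax in Hz. destruct (Rle_dec x y).
    rewrite !Rabs_right; lra. rewrite !Rabs_left1; lra.
Qed.

Lemma quad_derive (A : R -> R) lo hi x D C :
  lo < x < hi -> 0 <= C ->
  (forall y, lo < y < hi -> Rabs (A y - A x - (y - x) * D) <= C * (y - x) ^ 2) ->
  is_derive A x D.
Proof.
  intros Hx HC H. apply is_derive_Reals. intros eps Heps.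
  assert (Hd : 0 < Rmin (Rmin (x - lo) (hi - x)) (eps / (C + 1))).
  { apply Rmin_pos. apply Rmin_pos; lra. apply Rdiv_lt_0_compat; lra. }
  exists (mkposreal _ Hd). intros h Hh0 Hh. simpl in Hh.
  assert (H1 : Rabs h < Rmin (x - lo) (hi - x)) by (eapply Rlt_le_trans; [exact Hh| apply Rmin_l]).
  assert (H2 : Rabs h < eps / (C + 1)) by (eapply Rlt_le_trans; [exact Hh| apply Rmin_r]).
  assert (H3 : Rabs h < x - lo) by (eapply Rlt_le_trans; [exact H1| apply Rmin_l]).
  assert (H4 : Rabs h < hi - x) by (eapply Rlt_le_trans; [exact H1| apply Rmin_r]).
  assert (Hy : lo < x + h < hi) by (apply Rabs_lt_between in H3; apply Rabs_lt_between in H4; lra).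
  specialize (H _ Hy). replace (x + h - x) with h in H by ring.
  replace ((A (x + h) - A x) / h - D) with ((A (x + h) - A x - h * D) / h) by (field; auto).
  unfold Rdiv. rewrite Rabs_mult, Rabs_inv.
  assert (Hpos : 0 < Rabs h) by (apply Rabs_pos_lt; auto).
  apply Rle_lt_trans with (C * Rabs h).
  { apply Rmult_le_reg_r with (Rabs h). auto. rewrite Rmult_assoc, Rinv_l by lra.
    replace (C * Rabs h * Rabs h) with (C * h ^ 2). lra.
    rewrite Rmult_assoc, <- Rabs_mult, Rabs_right. ring. apply Rle_ge; exact (Rle_0_sqr h). }
  apply Rle_lt_trans with (C * (eps / (C + 1))).
  apply Rmult_le_compat_l; lra.
  apply Rlt_le_trans with ((C + 1) * (eps / (C + 1))). nra. right; field; lra.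
Qed.

Lemma is_derive_interval (f g : R -> R) lo hi x l :
  lo < x < hi -> (forall y, lo < y < hi -> f y = g y) -> is_derive g x l -> is_derive f x l.
Proof.
  intros Hx H Hg. apply is_derive_ext_loc with g; auto.
  assert (Ho : open (fun u => lo < u /\ u < hi)) by (apply open_and; [apply open_gt|apply open_lt]).
  specialize (Ho x Hx). eapply filter_imp; [|exact Ho]. intros u Hu. symmetry. apply H. exact Hu.
Qed.

Lemma interchange d lo hi (f f1 f2 : list Z -> R -> R) (W : list Z -> R) B M (A : R -> R) :
  0 <= B -> (forall k, 0 <= W k) -> (forall N, boxsum d N W <= M) ->
  (forall k x, lo < x < hi -> is_derive (f k) x (f1 k x)) ->
  (forall k x, lo < x < hi -> is_derive (f1 k) x (f2 k x)) ->
  (forall k x, lo < x < hi -> Rabs (f k x) <= B * W k /\ Rabs (f1 k x) <= B * W k /\ Rabs (f2 k x) <= B * W k) ->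
  (forall y, lo < y < hi -> A y = ssum d (fun k => f k y)) ->
  forall x, lo < x < hi -> is_derive A x (ssum d (fun k => f1 k x)).
Proof.
  intros HB HW HM Hd1 Hd2 Hb HA x Hx.
  assert (LW := nonneg_lim _ _ _ HW HM).
  assert (HC : 0 <= B * ssum d W * 1).
  { assert (0 <= ssum d W). 
    { eapply (is_lim_seq_le (fun _ => 0) _ 0 (ssum d W)) in LW; [exact LW| |apply is_lim_seq_const].
      intro; apply boxsum_nonneg; auto. }
    nra. }
  apply quad_derive with lo hi (B * ssum d W * 1); auto.
  intros y Hy. rewrite (HA y Hy), (HA x Hx).
  assert (Ly := dom_lim d W M B (fun k => f k y) HB HW HM (fun k => proj1 (Hb k y Hy))).
  assert (Lx := dom_lim d W M B (fun k => f k x) HB HW HM (fun k => proj1 (Hb k x Hx))).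
  assert (L1 := dom_lim d W M B (fun k => f1 k x) HB HW HM (fun k => proj1 (proj2 (Hb k x Hx)))).
  assert (L := is_lim_seq_minus' _ _ _ _ (is_lim_seq_minus' _ _ _ _ Ly Lx) (is_lim_seq_scal_l _ (y - x) _ L1)).
  simpl in L.
  pose proof (is_lim_seq_scal_l _ (B * (y - x) ^ 2) _ LW) as LW'. simpl in LW'.
  replace (B * ssum d W * 1 * (y - x) ^ 2) with (B * (y - x) ^ 2 * ssum d W) by ring.
  eapply lim_abs_le; [|exact L|exact LW'].
  intro n. simpl. rewrite <- boxsum_scal, <- boxsum_scal.
  replace (boxsum d n (fun k => f k y) - boxsum d n (fun k => f k x) - boxsum d n (fun k => (y - x) * f1 k x))
    with (boxsum d n (fun k => f k y - f k x - (y - x) * f1 k x)).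
  2:{ rewrite !boxsum_minus. reflexivity. }
  eapply Rle_trans. apply boxsum_abs. apply boxsum_le. intro k.
  replace (B * ((y - x) * ((y - x) * 1)) * W k) with ((B * W k) * (y - x) ^ 2) by ring.
  apply (taylor2 (f k) (f1 k) (f2 k) lo hi); auto.
  intros z Hz. apply Hb; auto.
Qed.

Definition tau (t : R) : R := / (1 + exp t).

Definition P1 (i : nat) (t : R) : R :=
  match i with
  | O => tau t
  | 1%nat => tau t ^ 2 - tau t
  | 2%nat => 2 * tau t ^ 3 - 3 * tau t ^ 2 + tau t
  | _ => 6 * tau t ^ 4 - 12 * tau t ^ 3 + 7 * tau t ^ 2 - tau t
  end.

Definition P2 (i : nat) (t : R) : R :=
  match i with
  | O => tau t ^ 2
  | 1%nat => 2 * tau t ^ 3 - 2 * tau t ^ 2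
  | 2%nat => 6 * tau t ^ 4 - 10 * tau t ^ 3 + 4 * tau t ^ 2
  | _ => 24 * tau t ^ 5 - 54 * tau t ^ 4 + 38 * tau t ^ 3 - 8 * tau t ^ 2
  end.

Lemma tau_derive t : is_derive tau t (tau t ^ 2 - tau t).
Proof.
  unfold tau. assert (0 < exp t) by apply exp_pos.
  auto_derive. lra. field. lra.
Qed.

Lemma tau_bounds t : 0 < tau t < 1 /\ tau t <= exp (- t).
Proof.
  unfold tau. assert (H := exp_pos t). rewrite exp_Ropp. split. split.
  apply Rinv_0_lt_compat; lra.
  rewrite <- Rinv_1. apply Rinv_lt_contravar; lra.
  apply Rinv_le_contravar; lra.
Qed.

Lemma poly_comp (p dp : R -> R) t : (forall x, is_derive p x (dp x)) ->
  is_derive (fun t => p (tau t)) t ((tau t ^ 2 - tau t) * dp (tau t)).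
Proof. intros H. apply (is_derive_comp p tau t). apply H. apply tau_derive. Qed.

Definition chain (P : nat -> R -> R) : Prop :=
  forall i t, (i < 3)%nat -> is_derive (P i) t (P (S i) t).

Definition chain_bd (P : nat -> R -> R) : Prop :=
  forall t, Rabs (P 0%nat t) <= 1 /\ forall i, (1 <= i <= 3)%nat -> Rabs (P i t) <= 100 * exp (- t).

Lemma poly_step (P : nat -> R -> R) i p dp :
  (forall t, P i t = p (tau t)) -> (forall t, P (S i) t = (tau t ^ 2 - tau t) * dp (tau t)) ->
  (forall x, is_derive p x (dp x)) -> forall t, is_derive (P i) t (P (S i) t).
Proof.
  intros H1 H2 H3 t. rewrite H2. eapply is_derive_ext. intro u. symmetry. apply H1.
  apply poly_comp. exact H3.
Qed.

Lemma P1_chain : chain P1.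
Proof.
  intros i t Hi. destruct i as [|[|[|i]]]; [| | |lia].
  - apply (poly_step P1 0 (fun x => x) (fun x => 1)); intros; simpl; try ring. auto_derive; auto.
  - apply (poly_step P1 1 (fun x => x ^ 2 - x) (fun x => 2 * x - 1)); intros; simpl; try ring. auto_derive; auto; ring.
  - apply (poly_step P1 2 (fun x => 2 * x ^ 3 - 3 * x ^ 2 + x) (fun x => 6 * x ^ 2 - 6 * x + 1)); intros; simpl; try ring. auto_derive; auto; ring.
Qed.

Lemma P2_chain : chain P2.
Proof.
  intros i t Hi. destruct i as [|[|[|i]]]; [| | |lia].
  - apply (poly_step P2 0 (fun x => x ^ 2) (fun x => 2 * x)); intros; simpl; try ring. auto_derive; auto; ring.
  - apply (poly_step P2 1 (fun x => 2 * x ^ 3 - 2 * x ^ 2) (fun x => 6 * x ^ 2 - 4 * x)); intros; simpl; try ring. auto_derive; auto; ring.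
  - apply (poly_step P2 2 (fun x => 6 * x ^ 4 - 10 * x ^ 3 + 4 * x ^ 2) (fun x => 24 * x ^ 3 - 30 * x ^ 2 + 8 * x)); intros; simpl; try ring. auto_derive; auto; ring.
Qed.

Lemma pow_facts x : 0 < x < 1 ->
  0 <= x ^ 2 <= x /\ 0 <= x ^ 3 <= x /\ 0 <= x ^ 4 <= x /\ 0 <= x ^ 5 <= x.
Proof.
  intros H.
  assert (A2 : 0 <= x ^ 2 <= x) by (simpl; nra).
  assert (A3 : 0 <= x ^ 3 <= x ^ 2) by (simpl; nra).
  assert (A4 : 0 <= x ^ 4 <= x ^ 3) by (simpl; nra).
  assert (A5 : 0 <= x ^ 5 <= x ^ 4) by (simpl; nra).
  lra.
Qed.

Lemma P1_bd : chain_bd P1.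
Proof.
  intro t. destruct (tau_bounds t) as [[H0 H1] He].
  destruct (pow_facts _ (conj H0 H1)) as [A2 [A3 [A4 A5]]].
  split. simpl. rewrite Rabs_right; lra.
  intros i Hi. destruct i as [|[|[|[|i]]]]; try lia; simpl P1; apply Rabs_le; lra.
Qed.

Lemma P2_bd : chain_bd P2.
Proof.
  intro t. destruct (tau_bounds t) as [[H0 H1] He].
  destruct (pow_facts _ (conj H0 H1)) as [A2 [A3 [A4 A5]]].
  split. simpl P2. rewrite Rabs_right; lra.
  intros i Hi. destruct i as [|[|[|[|i]]]]; try lia; simpl P2; apply Rabs_le; lra.
Qed.

Lemma inv_pow_derive (j : nat) a : 0 < a -> is_derive (fun y => / y ^ j) a (- INR j / a ^ (S j)).
Proof.
  intros Ha. auto_derive. apply pow_nonzero; lra.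
  destruct j. simpl; field; lra.
  rewrite <- pred_Sn. simpl pow. field. split; [apply pow_nonzero; lra| lra].
Qed.

Lemma ds_gen (Psi dPsi : R -> R) K L a s :
  (forall u, is_derive Psi u (dPsi u)) ->
  is_derive (fun x => K * Psi (x * L - ln a)) s (K * L * dPsi (s * L - ln a)).
Proof.
  intros H. rewrite Rmult_assoc. apply is_derive_scal.
  apply (is_derive_comp Psi (fun x => x * L - ln a) s). apply H.
  auto_derive; auto. ring.
Qed.

Lemma da_gen (Psi dPsi : R -> R) K L s a (j : nat) : 0 < a ->
  (forall u, is_derive Psi u (dPsi u)) ->
  is_derive (fun y => K * Psi (s * L - ln y) / y ^ j) a
    (- K * (dPsi (s * L - ln a) + INR j * Psi (s * L - ln a)) / a ^ (S j)).
Proof.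
  intros Ha H.
  apply is_derive_ext with (fun y => (K * Psi (s * L - ln y)) * / y ^ j). intro; reflexivity.
  evar (dd : R). replace (- K * (dPsi (s * L - ln a) + INR j * Psi (s * L - ln a)) / a ^ (S j)) with dd.
  apply (is_derive_mult (fun y => K * Psi (s * L - ln y)) (fun y => / y ^ j)).
  apply is_derive_scal. apply (is_derive_comp Psi (fun y => s * L - ln y) a). apply H.
  auto_derive; auto. apply inv_pow_derive; auto.
  intros; apply Rmult_comm.
  unfold dd. unfold plus, mult, scal; simpl. unfold mult; simpl.
  assert (a ^ j <> 0) by (apply pow_nonzero; lra).
  simpl pow. field. split; auto; lra.
Qed.

Inductive der := D0 | Ds | Da | Dss | Dsa | Daa | Dsss | Dsas | Dsaa | Daaa.

Definition Tg (P : nat -> R -> R) (L : R) (al : der) (s a : R) : R :=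
  let t := s * L - ln a in
  match al with
  | D0 => P 0%nat t
  | Ds => L * P 1%nat t
  | Da => - P 1%nat t / a
  | Dss => L ^ 2 * P 2%nat t
  | Dsa => - L * P 2%nat t / a
  | Daa => (P 1%nat t + P 2%nat t) / a ^ 2
  | Dsss => L ^ 3 * P 3%nat t
  | Dsas => - L ^ 2 * P 3%nat t / a
  | Dsaa => L * (P 2%nat t + P 3%nat t) / a ^ 2
  | Daaa => - (2 * P 1%nat t + 3 * P 2%nat t + P 3%nat t) / a ^ 3
  end.

Inductive sd : der -> der -> Prop :=
  | sd0 : sd D0 Ds | sd1 : sd Ds Dss | sd2 : sd Dss Dsss | sd3 : sd Da Dsa | sd4 : sd Dsa Dsas.
Inductive ad : der -> der -> Prop :=
  | ad0 : ad D0 Da | ad1 : ad Da Daa | ad2 : ad Daa Daaa | ad3 : ad Ds Dsa | ad4 : ad Dsa Dsaa.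

Lemma chain_i P i : chain P -> (i < 3)%nat -> forall u, is_derive (P i) u (P (S i) u).
Proof. intros H Hi u. apply H. auto. Qed.

Lemma isd (f g : R -> R) x l l' : is_derive f x l -> (forall t, f t = g t) -> l = l' -> is_derive g x l'.
Proof. intros H1 H2 H3. subst l'. eapply is_derive_ext; eauto. Qed.

Lemma T_ds P L a s al be : chain P -> 0 < a -> sd al be ->
  is_derive (fun x => Tg P L al x a) s (Tg P L be s a).
Proof.
  intros HP Ha Hs. destruct Hs; unfold Tg.
  - eapply isd; [apply (ds_gen (P 0%nat) (P 1%nat) 1 L a s (chain_i P 0 HP ltac:(lia)))| |];
    intros; simpl; field; lra.
  - eapply isd; [apply (ds_gen (P 1%nat) (P 2%nat) L L a s (chain_i P 1 HP ltac:(lia)))| |];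
    intros; simpl; field; lra.
  - eapply isd; [apply (ds_gen (P 2%nat) (P 3%nat) (L ^ 2) L a s (chain_i P 2 HP ltac:(lia)))| |];
    intros; simpl; field; lra.
  - eapply isd; [apply (ds_gen (P 1%nat) (P 2%nat) (- / a) L a s (chain_i P 1 HP ltac:(lia)))| |];
    intros; simpl; field; lra.
  - eapply isd; [apply (ds_gen (P 2%nat) (P 3%nat) (- L / a) L a s (chain_i P 2 HP ltac:(lia)))| |];
    intros; simpl; field; lra.
Qed.

Lemma chain_sum P i : chain P -> (i < 2)%nat ->
  forall u, is_derive (fun t => P i t + P (S i) t) u (P (S i) u + P (S (S i)) u).
Proof. intros H Hi u. apply (is_derive_plus (P i) (P (S i))); apply H; lia. Qed.

Lemma T_da P L a s al be : chain P -> 0 < a -> ad al be ->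
  is_derive (fun y => Tg P L al s y) a (Tg P L be s a).
Proof.
  intros HP Ha Hs. destruct Hs; unfold Tg.
  - eapply isd; [apply (da_gen (P 0%nat) (P 1%nat) 1 L s a 0 Ha (chain_i P 0 HP ltac:(lia)))| |].
    intros; simpl; field; lra. simpl; field; lra.
  - eapply isd; [apply (da_gen (P 1%nat) (P 2%nat) (-1) L s a 1 Ha (chain_i P 1 HP ltac:(lia)))| |].
    intros; simpl; rewrite ?Rmult_1_r; unfold Rdiv; ring. simpl; field; lra.
  - eapply isd; [apply (da_gen _ _ 1 L s a 2 Ha (chain_sum P 1 HP ltac:(lia)))| |].
    intros; simpl; rewrite ?Rmult_1_r; unfold Rdiv; ring. simpl; field; lra.
  - eapply isd; [apply (da_gen (P 1%nat) (P 2%nat) L L s a 0 Ha (chain_i P 1 HP ltac:(lia)))| |].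
    intros; simpl; field; lra. simpl; field; lra.
  - eapply isd; [apply (da_gen (P 2%nat) (P 3%nat) (-L) L s a 1 Ha (chain_i P 2 HP ltac:(lia)))| |].
    intros; simpl; rewrite ?Rmult_1_r; unfold Rdiv; ring. simpl; field; lra.
Qed.

Lemma pow_le3 x y j : 0 <= x <= y -> 1 <= y -> (j <= 3)%nat -> x ^ j <= y ^ 3.
Proof.
  intros H1 H2 Hj. apply Rle_trans with (y ^ j). apply pow_incr; lra.
  apply Rle_pow; auto.
Qed.

Lemma cube_exp L s0 : 0 <= L -> 0 < s0 -> (1 + L) ^ 3 <= (1 + 3 / s0) ^ 3 * exp (s0 * L).
Proof.
  intros HL Hs.
  assert (H1 : 1 + L <= (1 + 3 / s0) * exp (s0 * L / 3)).
  { apply Rle_trans with ((1 + 3 / s0) * (1 + s0 * L / 3)).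
    - assert (3 / s0 > 0) by (apply Rdiv_lt_0_compat; lra).
      replace ((1 + 3 / s0) * (1 + s0 * L / 3)) with (1 + L + 3 / s0 + s0 * L / 3) by (field; lra).
      assert (0 <= s0 * L / 3) by (apply Rmult_le_pos; [apply Rmult_le_pos|]; lra). lra.
    - apply Rmult_le_compat_l. assert (3 / s0 > 0) by (apply Rdiv_lt_0_compat; lra). lra.
      apply exp_ineq1_le. }
  replace (exp (s0 * L)) with (exp (s0 * L / 3) ^ 3).
  rewrite <- Rpow_mult_distr. apply pow_incr. lra.
  simpl. rewrite Rmult_1_r, <- !exp_plus. f_equal. field.
Qed.

Definition Kb (s0 a0 a1 : R) := a1 * (1 + 3 / s0) ^ 3 * (1 + / a0) ^ 3.
Definition BT (s0 a0 a1 : R) := 1 + 600 * Kb s0 a0 a1.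

Lemma Kb_pos s0 a0 a1 : 0 < s0 -> 0 < a0 -> 0 < a1 -> 0 < Kb s0 a0 a1.
Proof.
  intros. unfold Kb. assert (0 < 3 / s0) by (apply Rdiv_lt_0_compat; lra).
  assert (0 < / a0) by (apply Rinv_0_lt_compat; lra).
  apply Rmult_lt_0_compat. apply Rmult_lt_0_compat. lra. apply pow_lt; lra. apply pow_lt; lra.
Qed.

Lemma T_bound P L s0 a0 a1 s a al : chain_bd P -> 0 <= L -> 0 < s0 -> 0 < a0 ->
  s0 <= s -> a0 <= a <= a1 -> Rabs (Tg P L al s a) <= BT s0 a0 a1.
Proof.
  intros HP HL Hs0 Ha0 Hs Ha.
  set (t := s * L - ln a).
  destruct (HP t) as [B0 Bi].
  set (e := exp (- t)).
  assert (He : e <= a1 * exp (- (s0 * L))).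
  { unfold e, t. replace (- (s * L - ln a)) with (ln a + - (s * L)) by ring.
    rewrite exp_plus, exp_ln by lra. apply Rmult_le_compat. lra. apply Rlt_le, exp_pos. lra.
    assert (s0 * L <= s * L) by (apply Rmult_le_compat_r; lra).
    destruct (Req_dec (s * L) (s0 * L)) as [E|E]. rewrite E; lra.
    left; apply exp_increasing; lra. }
  assert (He0 : 0 < e) by apply exp_pos.
  set (Lam := (1 + L) ^ 3). set (Ai := (1 + / a0) ^ 3).
  assert (HLe : Lam * e <= a1 * (1 + 3 / s0) ^ 3).
  { apply Rle_trans with ((1 + 3 / s0) ^ 3 * exp (s0 * L) * (a1 * exp (- (s0 * L)))).
    apply Rmult_le_compat; try lra. unfold Lam; apply pow_le; lra. apply cube_exp; auto.
    rewrite exp_Ropp. right. field. split. lra. apply Rgt_not_eq, exp_pos. }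
  assert (HAi : 0 < Ai) by (unfold Ai; apply pow_lt; assert (0 < / a0) by (apply Rinv_0_lt_compat; lra); lra).
  assert (HK : Lam * Ai * e <= Kb s0 a0 a1).
  { unfold Kb. fold Ai. replace (Lam * Ai * e) with ((Lam * e) * Ai) by ring.
    apply Rmult_le_compat_r; lra. }
  assert (Key : forall (i j : nat) c, (i <= 3)%nat -> (j <= 3)%nat -> Rabs c <= 600 * e ->
     Rabs (L ^ i * (/ a) ^ j * c) <= BT s0 a0 a1).
  { intros i j c Hi Hj Hc. unfold BT.
    assert (U1 : 0 <= L ^ i <= Lam) by (split; [apply pow_le; lra| apply pow_le3; [lra|lra|lia]]).
    assert (Hia : 0 < / a <= 1 + / a0).
    { split. apply Rinv_0_lt_compat; lra. assert (/ a <= / a0) by (apply Rinv_le_contravar; lra).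
      assert (0 < / a0) by (apply Rinv_0_lt_compat; lra). lra. }
    assert (0 < / a0) by (apply Rinv_0_lt_compat; lra).
    assert (U2 : 0 <= (/ a) ^ j <= Ai) by (split; [apply pow_le; lra| apply pow_le3; [lra|lra|lia]]).
    rewrite Rabs_mult, Rabs_mult, (Rabs_right (L ^ i)), (Rabs_right ((/ a) ^ j)) by lra.
    apply Rle_trans with (Lam * Ai * (600 * e)).
    apply Rmult_le_compat; try apply Rabs_pos. apply Rmult_le_pos; lra. apply Rmult_le_compat; lra. auto.
    nra. }
  assert (Q1 := Bi 1%nat ltac:(lia)). assert (Q2 := Bi 2%nat ltac:(lia)). assert (Q3 := Bi 3%nat ltac:(lia)).
  fold t e in Q1, Q2, Q3.
  apply Rabs_le_between in Q1. apply Rabs_le_between in Q2. apply Rabs_le_between in Q3.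
  assert (Hk := Kb_pos s0 a0 a1 Hs0 Ha0 ltac:(lra)).
  assert (Ha' : a <> 0) by lra.
  destruct al; unfold Tg; fold t.
  - unfold BT. lra.
  - replace (L * P 1%nat t) with (L ^ 1 * (/ a) ^ 0 * P 1%nat t) by (simpl; field; auto).
    apply Key; try lia. apply Rabs_le; lra.
  - replace (- P 1%nat t / a) with (L ^ 0 * (/ a) ^ 1 * (- P 1%nat t)) by (simpl; field; auto).
    apply Key; try lia. apply Rabs_le; lra.
  - replace (L ^ 2 * P 2%nat t) with (L ^ 2 * (/ a) ^ 0 * P 2%nat t) by (simpl; field; auto).
    apply Key; try lia. apply Rabs_le; lra.
  - replace (- L * P 2%nat t / a) with (L ^ 1 * (/ a) ^ 1 * (- P 2%nat t)) by (simpl; field; auto).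
    apply Key; try lia. apply Rabs_le; lra.
  - replace ((P 1%nat t + P 2%nat t) / a ^ 2) with (L ^ 0 * (/ a) ^ 2 * (P 1%nat t + P 2%nat t)) by (simpl; field; auto).
    apply Key; try lia. apply Rabs_le; lra.
  - replace (L ^ 3 * P 3%nat t) with (L ^ 3 * (/ a) ^ 0 * P 3%nat t) by (simpl; field; auto).
    apply Key; try lia. apply Rabs_le; lra.
  - replace (- L ^ 2 * P 3%nat t / a) with (L ^ 2 * (/ a) ^ 1 * (- P 3%nat t)) by (simpl; field; auto).
    apply Key; try lia. apply Rabs_le; lra.
  - replace (L * (P 2%nat t + P 3%nat t) / a ^ 2) with (L ^ 1 * (/ a) ^ 2 * (P 2%nat t + P 3%nat t)) by (simpl; field; auto).
    apply Key; try lia. apply Rabs_le; lra.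
  - replace (- (2 * P 1%nat t + 3 * P 2%nat t + P 3%nat t) / a ^ 3) with (L ^ 0 * (/ a) ^ 3 * (- (2 * P 1%nat t + 3 * P 2%nat t + P 3%nat t))) by (simpl; field; auto).
    apply Key; try lia. apply Rabs_le; lra.
Qed.

Lemma normk2_cases k : normk2 k = 0 \/ 1 <= normk2 k.
Proof.
  induction k as [|z k IH]; simpl. left; reflexivity.
  assert (Hk : 0 <= normk2 k) by (destruct IH; lra).
  destruct (Z.eq_dec z 0) as [->|Hz].
  - simpl. destruct IH; [left|right]; lra.
  - right. assert (IZR z ^ 2 >= 1).
    { destruct (Z_lt_le_dec z 0).
      + assert (IZR z <= -1) by (apply IZR_le; lia). simpl; nra.
      + assert (1 <= IZR z) by (apply IZR_le; lia). simpl; nra. }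
    lra.
Qed.

Definition Rg (P : nat -> R -> R) (k : list Z) (al : der) (s a : R) : R :=
  if Req_EM_T (normk2 k) 0 then (match al with D0 => 1 | _ => 0 end)
  else Tg P (ln (normk2 k)) al s a.

Lemma Rg_ds P k a s al be : chain P -> 0 < a -> sd al be ->
  is_derive (fun x => Rg P k al x a) s (Rg P k be s a).
Proof.
  intros HP Ha Hs. unfold Rg. destruct (Req_EM_T (normk2 k) 0).
  - eapply isd. apply (is_derive_const (match al with D0 => 1 | _ => 0 end) s). intro; reflexivity.
    destruct Hs; reflexivity.
  - apply T_ds; auto.
Qed.

Lemma Rg_da P k a s al be : chain P -> 0 < a -> ad al be ->
  is_derive (fun y => Rg P k al s y) a (Rg P k be s a).
Proof.
  intros HP Ha Hs. unfold Rg. destruct (Req_EM_T (normk2 k) 0).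
  - eapply isd. apply (is_derive_const (match al with D0 => 1 | _ => 0 end) a). intro; reflexivity.
    destruct Hs; reflexivity.
  - apply T_da; auto.
Qed.

Lemma BT_ge1 s0 a0 a1 : 0 < s0 -> 0 < a0 -> 0 < a1 -> 1 <= BT s0 a0 a1.
Proof. intros A B C. unfold BT. assert (H := Kb_pos s0 a0 a1 A B C). lra. Qed.

Lemma Rg_bound P k s0 a0 a1 s a al : chain_bd P -> 0 < s0 -> 0 < a0 ->
  s0 <= s -> a0 <= a <= a1 -> Rabs (Rg P k al s a) <= BT s0 a0 a1.
Proof.
  intros HP Hs0 Ha0 Hs Ha. assert (H1 := BT_ge1 s0 a0 a1 Hs0 Ha0 ltac:(lra)).
  unfold Rg. destruct (Req_EM_T (normk2 k) 0).
  - destruct al; try (rewrite Rabs_R0; lra). rewrite Rabs_R1; lra.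
  - apply T_bound; auto. destruct (normk2_cases k). contradiction.
    rewrite <- ln_1. apply ln_le; lra.
Qed.

Definition Gk (g : list Z -> C) k := Cmod (g k) ^ 2.
Definition Hk (g u : list Z -> C) k := fst (g k) * fst (u k) + snd (g k) * snd (u k).
Definition Wk (g u : list Z -> C) k := Gk g k + Gk u k.

Definition Fg (g u : list Z -> C) (k : list Z) (al : der) (s a : R) : R :=
  Gk g k * Rg P2 k al s a - 2 * Hk g u k * Rg P1 k al s a + (match al with D0 => Gk u k | _ => 0 end).

Lemma Cmod_sq z : Cmod z ^ 2 = fst z ^ 2 + snd z ^ 2.
Proof. unfold Cmod. apply pow2_sqrt. assert (0 <= fst z ^ 2) by (simpl; nra). assert (0 <= snd z ^ 2) by (simpl; nra). lra. Qed.

Lemma Hk_bound g u k : 2 * Rabs (Hk g u k) <= Wk g u k.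
Proof.
  unfold Wk, Gk, Hk. rewrite !Cmod_sq. destruct (g k) as [x y]; destruct (u k) as [x' y']; simpl.
  assert (2 * Rabs (x * x' + y * y') <= (x ^ 2 + y ^ 2) + (x' ^ 2 + y' ^ 2)).
  { assert (0 <= (x - x') * (x - x')) by apply Rle_0_sqr.
    assert (0 <= (y - y') * (y - y')) by apply Rle_0_sqr.
    assert (0 <= (x + x') * (x + x')) by apply Rle_0_sqr.
    assert (0 <= (y + y') * (y + y')) by apply Rle_0_sqr.
    simpl pow.
    destruct (Rle_dec 0 (x * x' + y * y')). rewrite Rabs_right by lra. nra.
    rewrite Rabs_left by lra. nra. } lra.
Qed.

Definition Bf s0 a0 a1 := 2 * BT s0 a0 a1 + 1.

Lemma Gk_nonneg g k : 0 <= Gk g k.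
Proof. unfold Gk. rewrite Cmod_sq. simpl. nra. Qed.

Lemma Wk_nonneg g u k : 0 <= Wk g u k.
Proof. unfold Wk. assert (H1 := Gk_nonneg g k). assert (H2 := Gk_nonneg u k). lra. Qed.

Lemma Fg_bound g u k s0 a0 a1 s a al : 0 < s0 -> 0 < a0 ->
  s0 <= s -> a0 <= a <= a1 -> Rabs (Fg g u k al s a) <= Bf s0 a0 a1 * Wk g u k.
Proof.
  intros Hs0 Ha0 Hs Ha.
  assert (R1 := Rg_bound P1 k s0 a0 a1 s a al P1_bd Hs0 Ha0 Hs Ha).
  assert (R2 := Rg_bound P2 k s0 a0 a1 s a al P2_bd Hs0 Ha0 Hs Ha).
  assert (HH := Hk_bound g u k). assert (G1 := Gk_nonneg g k). assert (G2 := Gk_nonneg u k).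
  assert (HB := BT_ge1 s0 a0 a1 Hs0 Ha0 ltac:(lra)).
  unfold Fg, Bf. unfold Wk in *.
  set (r1 := Rg P1 k al s a) in *. set (r2 := Rg P2 k al s a) in *.
  set (c := match al with D0 => Gk u k | _ => 0 end).
  assert (Hc : Rabs c <= Gk u k) by (unfold c; destruct al; rewrite ?Rabs_R0; try lra; rewrite Rabs_right; lra).
  eapply Rle_trans. apply Rabs_triang. 
  eapply Rle_trans. apply Rplus_le_compat_r. apply Rabs_triang.
  rewrite Rabs_Ropp, !Rabs_mult, (Rabs_right 2) by lra. rewrite (Rabs_right (Gk g k)) by lra.
  assert (Rabs (Hk g u k) * Rabs r1 <= Rabs (Hk g u k) * BT s0 a0 a1) by (apply Rmult_le_compat_l; [apply Rabs_pos|lra]).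
  assert (Gk g k * Rabs r2 <= Gk g k * BT s0 a0 a1) by (apply Rmult_le_compat_l; lra).
  nra.
Qed.

Lemma lin_derive (f1 f2 : R -> R) d1 d2 A Bc c x :
  is_derive f1 x d1 -> is_derive f2 x d2 ->
  is_derive (fun y => A * f2 y - Bc * f1 y + c) x (A * d2 - Bc * d1 + 0).
Proof.
  intros H1 H2.
  apply (is_derive_plus (fun y => A * f2 y - Bc * f1 y) (fun _ => c)).
  apply (is_derive_minus (fun y => A * f2 y) (fun y => Bc * f1 y)); apply is_derive_scal; auto.
  apply (isd (fun _ => c) (fun _ => c) x zero 0); [apply is_derive_const|intro; reflexivity|reflexivity].
Qed.

Lemma Fg_ds g u k a s al be : 0 < a -> sd al be ->
  is_derive (fun x => Fg g u k al x a) s (Fg g u k be s a).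
Proof.
  intros Ha Hs. unfold Fg.
  eapply isd. apply (lin_derive (fun x => Rg P1 k al x a) (fun x => Rg P2 k al x a) (Rg P1 k be s a) (Rg P2 k be s a) (Gk g k) (2 * Hk g u k) (match al with D0 => Gk u k | _ => 0 end)); apply Rg_ds; eauto using P1_chain, P2_chain.
  intro; reflexivity. destruct Hs; simpl; ring.
Qed.

Lemma Fg_da g u k a s al be : 0 < a -> ad al be ->
  is_derive (fun y => Fg g u k al s y) a (Fg g u k be s a).
Proof.
  intros Ha Hs. unfold Fg.
  eapply isd. apply (lin_derive (fun y => Rg P1 k al s y) (fun y => Rg P2 k al s y) (Rg P1 k be s a) (Rg P2 k be s a) (Gk g k) (2 * Hk g u k) (match al with D0 => Gk u k | _ => 0 end)); apply Rg_da; eauto using P1_chain, P2_chain.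
  intro; reflexivity. destruct Hs; simpl; ring.
Qed.

Lemma Fg_term g u k s a : 0 < a ->
  Cmod (Cminus (Ssol g s a k) (u k)) ^ 2 = Fg g u k D0 s a.
Proof.
  intros Ha. unfold Fg, Ssol, Gk, Hk. rewrite !Cmod_sq.
  assert (Er : Rg P1 k D0 s a = a / (a + kpow k s) /\ Rg P2 k D0 s a = (a / (a + kpow k s)) ^ 2).
  { unfold Rg, kpow, Tg, P1, P2. destruct (Req_EM_T (normk2 k) 0).
    - split; field; lra.
    - unfold tau, Rpower, Rminus. rewrite exp_plus, exp_Ropp, exp_ln by lra.
      assert (0 < exp (s * ln (normk2 k))) by apply exp_pos.
      try replace (ln (normk2 k) * s) with (s * ln (normk2 k)) by ring.
      split; field; lra. }
  destruct Er as [-> ->].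
  destruct (g k) as [x y]; destruct (u k) as [x' y']. unfold Cminus, Cmult, RtoC, Cplus, Copp. simpl. ring.
Qed.

Definition LS d g u al s a := ssum d (fun k => Fg g u k al s a).

Lemma ssum_ext d F G : (forall k, F k = G k) -> ssum d F = ssum d G.
Proof. intros H. unfold ssum. f_equal. apply Lim_seq_ext. intro n. apply boxsum_ext. auto. Qed.

Lemma Wbox d g u Mg Mu : (forall N, boxsum d N (Gk g) <= Mg) -> (forall N, boxsum d N (Gk u) <= Mu) ->
  forall N, boxsum d N (Wk g u) <= Mg + Mu.
Proof. intros H1 H2 N. unfold Wk. rewrite boxsum_plus. specialize (H1 N); specialize (H2 N). lra. Qed.

Lemma LS_ds d g u s0 s1 a0 a1 M al be ga s a : 0 < s0 -> 0 < a0 ->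
  (forall N, boxsum d N (Wk g u) <= M) -> sd al be -> sd be ga ->
  a0 < a < a1 -> s0 < s < s1 ->
  is_derive (fun x => LS d g u al x a) s (LS d g u be s a).
Proof.
  intros Hs0 Ha0 HM H1 H2 Ha Hs. unfold LS.
  apply (interchange d s0 s1 (fun k x => Fg g u k al x a) (fun k x => Fg g u k be x a) (fun k x => Fg g u k ga x a)
           (Wk g u) (Bf s0 a0 a1) M); auto.
  - unfold Bf. assert (H := BT_ge1 s0 a0 a1 Hs0 Ha0 ltac:(lra)). lra.
  - apply Wk_nonneg.
  - intros k x Hx. apply Fg_ds; auto; lra.
  - intros k x Hx. apply Fg_ds; auto; lra.
  - intros k x Hx. repeat split; apply Fg_bound; auto; lra.
Qed.

Lemma LS_da d g u s0 s1 a0 a1 M al be ga s a : 0 < s0 -> 0 < a0 ->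
  (forall N, boxsum d N (Wk g u) <= M) -> ad al be -> ad be ga ->
  a0 < a < a1 -> s0 < s < s1 ->
  is_derive (fun y => LS d g u al s y) a (LS d g u be s a).
Proof.
  intros Hs0 Ha0 HM H1 H2 Ha Hs. unfold LS.
  apply (interchange d a0 a1 (fun k y => Fg g u k al s y) (fun k y => Fg g u k be s y) (fun k y => Fg g u k ga s y)
           (Wk g u) (Bf s0 a0 a1) M); auto.
  - unfold Bf. assert (H := BT_ge1 s0 a0 a1 Hs0 Ha0 ltac:(lra)). lra.
  - apply Wk_nonneg.
  - intros k y Hy. apply Fg_da; auto; lra.
  - intros k y Hy. apply Fg_da; auto; lra.
  - intros k y Hy. repeat split; apply Fg_bound; auto; lra.
Qed.

Lemma LS_bound d g u s0 a0 a1 M al s a : 0 < s0 -> 0 < a0 ->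
  (forall N, boxsum d N (Wk g u) <= M) -> s0 <= s -> a0 <= a <= a1 ->
  Rabs (LS d g u al s a) <= Bf s0 a0 a1 * ssum d (Wk g u).
Proof.
  intros Hs0 Ha0 HM Hs Ha. unfold LS.
  apply ssum_abs_le with M; auto.
  - unfold Bf. assert (H := BT_ge1 s0 a0 a1 Hs0 Ha0 ltac:(lra)). lra.
  - apply Wk_nonneg.
  - intro k. apply Fg_bound; auto.
Qed.

Lemma jfun_eq d g u phi s a : 0 < a ->
  jfun d g u phi s a = / (2 * (2 * PI) ^ d) * LS d g u D0 s a + phi s a.
Proof.
  intros Ha. unfold jfun, LS. f_equal. f_equal.
  apply (ssum_ext d (fun k => Cmod (Cminus (Ssol g s a k) (u k)) ^ 2)). intro k. apply Fg_term; auto.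
Qed.


Lemma final_alg c A B Cc m p11 p12 p21 p22 theta v1 v2 : 0 < c ->
  - m <= A <= m -> - m <= B <= m -> - m <= Cc <= m -> c * m < theta / 4 ->
  0 <= v1 * (p11 * v1 + p12 * v2) + v2 * (p21 * v1 + p22 * v2) - theta * (v1 ^ 2 + v2 ^ 2) ->
  0 <= v1 * ((c * A + p11) * v1 + (c * B + p12) * v2) + v2 * ((c * B + p21) * v1 + (c * Cc + p22) * v2)
       - theta / 2 * (v1 ^ 2 + v2 ^ 2).
Proof.
  intros Hc BA BB BC Hcm Hph.
  assert (P1' : 0 <= v1 ^ 2) by apply pow2_ge_0.
  assert (P2' : 0 <= v2 ^ 2) by apply pow2_ge_0.
  assert (Sv : 0 <= v1 ^ 2 + v2 ^ 2) by lra.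
  assert (Q1 : A * v1 ^ 2 >= - m * v1 ^ 2).
  { assert (0 <= (A + m) * v1 ^ 2) by (apply Rmult_le_pos; lra).
    assert (E : (A + m) * v1 ^ 2 = A * v1 ^ 2 + m * v1 ^ 2) by ring. lra. }
  assert (Q3 : Cc * v2 ^ 2 >= - m * v2 ^ 2).
  { assert (0 <= (Cc + m) * v2 ^ 2) by (apply Rmult_le_pos; lra).
    assert (E : (Cc + m) * v2 ^ 2 = Cc * v2 ^ 2 + m * v2 ^ 2) by ring. lra. }
  assert (Q2 : 2 * B * v1 * v2 >= - m * (v1 ^ 2 + v2 ^ 2)).
  { assert (0 <= (m - B) * (v1 - v2) ^ 2) by (apply Rmult_le_pos; [lra|apply pow2_ge_0]).
    assert (0 <= (m + B) * (v1 + v2) ^ 2) by (apply Rmult_le_pos; [lra|apply pow2_ge_0]).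
    assert (E : (m - B) * (v1 - v2) ^ 2 + (m + B) * (v1 + v2) ^ 2 = 2 * m * (v1 ^ 2 + v2 ^ 2) + 4 * (B * v1 * v2)) by ring.
    assert (F2 : 2 * B * v1 * v2 = 2 * (B * v1 * v2)) by ring.
    assert (F3 : - m * (v1 ^ 2 + v2 ^ 2) = - (m * (v1 ^ 2 + v2 ^ 2))) by ring.
    assert (F4 : 2 * m * (v1 ^ 2 + v2 ^ 2) = 2 * (m * (v1 ^ 2 + v2 ^ 2))) by ring.
    lra. }
  assert (HQ : c * (A * v1 ^ 2 + 2 * B * v1 * v2 + Cc * v2 ^ 2) >= - (2 * (c * m)) * (v1 ^ 2 + v2 ^ 2)).
  { apply Rle_ge. replace (- (2 * (c * m)) * (v1 ^ 2 + v2 ^ 2)) with (c * (- 2 * m * (v1 ^ 2 + v2 ^ 2))) by ring.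
    apply Rmult_le_compat_l. lra.
    assert (E : - 2 * m * (v1 ^ 2 + v2 ^ 2) = - m * v1 ^ 2 + - m * (v1 ^ 2 + v2 ^ 2) + - m * v2 ^ 2) by ring.
    lra. }
  assert (HQ' : (2 * (c * m)) * (v1 ^ 2 + v2 ^ 2) <= theta / 2 * (v1 ^ 2 + v2 ^ 2)).
  { apply Rmult_le_compat_r; lra. }
  assert (HEq : v1 * ((c * A + p11) * v1 + (c * B + p12) * v2) +
     v2 * ((c * B + p21) * v1 + (c * Cc + p22) * v2) -
     theta / 2 * (v1 ^ 2 + v2 ^ 2) =
    c * (A * v1 ^ 2 + 2 * B * v1 * v2 + Cc * v2 ^ 2) +
     (v1 * (p11 * v1 + p12 * v2) + v2 * (p21 * v1 + p22 * v2)
      - theta * (v1 ^ 2 + v2 ^ 2)) + theta / 2 * (v1 ^ 2 + v2 ^ 2)) by field.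
  change (0 <= v1 * ((c * A + p11) * v1 + (c * B + p12) * v2) +
     v2 * ((c * B + p21) * v1 + (c * Cc + p22) * v2) -
     theta / 2 * (v1 ^ 2 + v2 ^ 2)).
  rewrite HEq.
  lra.
Qed.

Theorem lemma4 (d : nat) (s0 s1 a0 a1 theta : R) :
  (1 <= d)%nat -> 0 < s0 -> s0 < s1 -> 0 < a0 -> a0 < a1 -> 0 < theta ->
  exists delta : R, 0 < delta /\
  forall (phi : R -> R -> R),
    C2_on s0 s1 a0 a1 phi ->
    (forall s a, inW s0 s1 a0 a1 s a -> 0 <= phi s a) ->
    convex_on s0 s1 a0 a1 phi ->
    blows_up_at_boundary s0 s1 a0 a1 phi ->
    (forall s a, inW s0 s1 a0 a1 s a -> hess_psd_shift phi theta s a) ->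
  forall (g ud : list Z -> C),
    l2summable d g -> g (repeat 0%Z d) = RtoC 0 ->
    l2summable d ud ->
    L2norm d g < delta -> L2norm d ud < delta ->
    exists kappa : R, 0 < kappa /\
      twice_diff_on s0 s1 a0 a1 (jfun d g ud phi) /\
      forall s a, inW s0 s1 a0 a1 s a -> hess_psd_shift (jfun d g ud phi) kappa s a.
Proof.
  intros Hd Hs0 Hs01 Ha0 Ha01 Hth.
  set (Bff := Bf s0 a0 a1).
  assert (HBf : 0 < Bff).
  { unfold Bff, Bf. assert (H := BT_ge1 s0 a0 a1 Hs0 Ha0 ltac:(lra)). lra. }
  exists (sqrt (theta / (4 * Bff))). split.
  { apply sqrt_lt_R0. apply Rdiv_lt_0_compat; lra. }
  intros phi HC2 Hnn Hcvx Hblow Hhess g ud Hg Hg0 Hu Hng Hnu.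
  destruct Hg as [Mg HMg]. destruct Hu as [Mu HMu].
  assert (HM : forall N, boxsum d N (Wk g ud) <= Mg + Mu) by (apply Wbox; [exact HMg|exact HMu]).
  set (c := / (2 * (2 * PI) ^ d)).
  assert (HP : 0 < (2 * PI) ^ d) by (apply pow_lt; assert (H := PI_RGT_0); lra).
  assert (Hc : 0 < c) by (unfold c; apply Rinv_0_lt_compat; lra).
  destruct HC2 as [Htd _].
  exists (theta / 2). split; [lra|].
  set (J := jfun d g ud phi).
  assert (E1 : forall s a, inW s0 s1 a0 a1 s a ->
            is_derive (fun x => J x a) s (c * LS d g ud Ds s a + Defs.d1 phi s a)).
  { intros s a H. destruct (Htd s a H) as [p1 _]. destruct H as [Hs Ha].
    eapply is_derive_ext. intro x; symmetry; apply jfun_eq; lra.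
    apply (is_derive_plus (fun x => c * LS d g ud D0 x a) (fun x => phi x a)).
    apply is_derive_scal. apply (LS_ds d g ud s0 s1 a0 a1 (Mg + Mu) D0 Ds Dss); auto; constructor.
    apply Derive_correct; exact p1. }
  assert (E2 : forall s a, inW s0 s1 a0 a1 s a ->
            is_derive (fun y => J s y) a (c * LS d g ud Da s a + Defs.d2 phi s a)).
  { intros s a H. destruct (Htd s a H) as [_ [p2 _]]. destruct H as [Hs Ha].
    apply is_derive_interval with (fun y => c * LS d g ud D0 s y + phi s y) a0 a1. lra.
    intros y Hy. apply jfun_eq; lra.
    apply (is_derive_plus (fun y => c * LS d g ud D0 s y) (fun y => phi s y)).
    apply is_derive_scal. apply (LS_da d g ud s0 s1 a0 a1 (Mg + Mu) D0 Da Daa); auto; constructor.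
    apply Derive_correct; exact p2. }
  assert (D1 : forall s a, inW s0 s1 a0 a1 s a -> Defs.d1 J s a = c * LS d g ud Ds s a + Defs.d1 phi s a).
  { intros s a H. unfold Defs.d1 at 1. apply is_derive_unique. apply E1; auto. }
  assert (D2 : forall s a, inW s0 s1 a0 a1 s a -> Defs.d2 J s a = c * LS d g ud Da s a + Defs.d2 phi s a).
  { intros s a H. unfold Defs.d2 at 1. apply is_derive_unique. apply E2; auto. }
  assert (E11 : forall s a, inW s0 s1 a0 a1 s a ->
            is_derive (fun x => Defs.d1 J x a) s (c * LS d g ud Dss s a + Defs.d1 (Defs.d1 phi) s a)).
  { intros s a H. destruct (Htd s a H) as [_ [_ [p3 _]]]. destruct H as [Hs Ha].
    apply is_derive_interval with (fun x => c * LS d g ud Ds x a + Defs.d1 phi x a) s0 s1. lra.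
    intros y Hy. apply D1. split; lra.
    apply (is_derive_plus (fun x => c * LS d g ud Ds x a) (fun x => Defs.d1 phi x a)).
    apply is_derive_scal. apply (LS_ds d g ud s0 s1 a0 a1 (Mg + Mu) Ds Dss Dsss); auto; constructor.
    apply Derive_correct; exact p3. }
  assert (E12 : forall s a, inW s0 s1 a0 a1 s a ->
            is_derive (fun y => Defs.d1 J s y) a (c * LS d g ud Dsa s a + Defs.d2 (Defs.d1 phi) s a)).
  { intros s a H. destruct (Htd s a H) as [_ [_ [_ [p4 _]]]]. destruct H as [Hs Ha].
    apply is_derive_interval with (fun y => c * LS d g ud Ds s y + Defs.d1 phi s y) a0 a1. lra.
    intros y Hy. apply D1. split; lra.
    apply (is_derive_plus (fun y => c * LS d g ud Ds s y) (fun y => Defs.d1 phi s y)).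
    apply is_derive_scal. apply (LS_da d g ud s0 s1 a0 a1 (Mg + Mu) Ds Dsa Dsaa); auto; constructor.
    apply Derive_correct; exact p4. }
  assert (E21 : forall s a, inW s0 s1 a0 a1 s a ->
            is_derive (fun x => Defs.d2 J x a) s (c * LS d g ud Dsa s a + Defs.d1 (Defs.d2 phi) s a)).
  { intros s a H. destruct (Htd s a H) as [_ [_ [_ [_ [p5 _]]]]]. destruct H as [Hs Ha].
    apply is_derive_interval with (fun x => c * LS d g ud Da x a + Defs.d2 phi x a) s0 s1. lra.
    intros y Hy. apply D2. split; lra.
    apply (is_derive_plus (fun x => c * LS d g ud Da x a) (fun x => Defs.d2 phi x a)).
    apply is_derive_scal. apply (LS_ds d g ud s0 s1 a0 a1 (Mg + Mu) Da Dsa Dsas); auto; constructor.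
    apply Derive_correct; exact p5. }
  assert (E22 : forall s a, inW s0 s1 a0 a1 s a ->
            is_derive (fun y => Defs.d2 J s y) a (c * LS d g ud Daa s a + Defs.d2 (Defs.d2 phi) s a)).
  { intros s a H. destruct (Htd s a H) as [_ [_ [_ [_ [_ p6]]]]]. destruct H as [Hs Ha].
    apply is_derive_interval with (fun y => c * LS d g ud Da s y + Defs.d2 phi s y) a0 a1. lra.
    intros y Hy. apply D2. split; lra.
    apply (is_derive_plus (fun y => c * LS d g ud Da s y) (fun y => Defs.d2 phi s y)).
    apply is_derive_scal. apply (LS_da d g ud s0 s1 a0 a1 (Mg + Mu) Da Daa Daaa); auto; constructor.
    apply Derive_correct; exact p6. }
  split.
  { intros s a H. 
    refine (conj (ex_intro _ _ (E1 s a H)) (conj (ex_intro _ _ (E2 s a H)) (conj (ex_intro _ _ (E11 s a H))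
      (conj (ex_intro _ _ (E12 s a H)) (conj (ex_intro _ _ (E21 s a H)) (ex_intro _ _ (E22 s a H))))))). }
  set (SW := ssum d (Wk g ud)).
  assert (LG := nonneg_lim d (Gk g) Mg (Gk_nonneg g) HMg).
  assert (LU := nonneg_lim d (Gk ud) Mu (Gk_nonneg ud) HMu).
  assert (HSW : SW = ssum d (Gk g) + ssum d (Gk ud)).
  { unfold SW. apply ssum_of_lim. eapply is_lim_seq_ext; [|exact (is_lim_seq_plus' _ _ _ _ LG LU)].
    intro n. unfold Wk. rewrite boxsum_plus. reflexivity. }
  assert (Hlg : ssum d (Gk g) / (2 * PI) ^ d < theta / (4 * Bff)).
  { apply sqrt_lt_0_alt. exact Hng. }
  assert (Hlu : ssum d (Gk ud) / (2 * PI) ^ d < theta / (4 * Bff)).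
  { apply sqrt_lt_0_alt. exact Hnu. }
  assert (HcSW : c * SW < theta / (4 * Bff)).
  { rewrite HSW. unfold c. replace (/ (2 * (2 * PI) ^ d) * (ssum d (Gk g) + ssum d (Gk ud)))
      with ((ssum d (Gk g) / (2 * PI) ^ d + ssum d (Gk ud) / (2 * PI) ^ d) / 2) by (field; lra).
    lra. }
  assert (Hcm : c * (Bff * SW) < theta / 4).
  { replace (c * (Bff * SW)) with (Bff * (c * SW)) by ring.
    apply Rlt_le_trans with (Bff * (theta / (4 * Bff))).
    apply Rmult_lt_compat_l; auto. right; field; lra. }
  intros s a H v1 v2. unfold hess_form.
  assert (H11 : Defs.d1 (Defs.d1 J) s a = c * LS d g ud Dss s a + Defs.d1 (Defs.d1 phi) s a)
    by (apply is_derive_unique; apply E11; auto).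
  assert (H12 : Defs.d2 (Defs.d1 J) s a = c * LS d g ud Dsa s a + Defs.d2 (Defs.d1 phi) s a)
    by (apply is_derive_unique; apply E12; auto).
  assert (H21 : Defs.d1 (Defs.d2 J) s a = c * LS d g ud Dsa s a + Defs.d1 (Defs.d2 phi) s a)
    by (apply is_derive_unique; apply E21; auto).
  assert (H22 : Defs.d2 (Defs.d2 J) s a = c * LS d g ud Daa s a + Defs.d2 (Defs.d2 phi) s a)
    by (apply is_derive_unique; apply E22; auto).
  rewrite H11, H12, H21, H22.
  assert (Hph := Hhess s a H v1 v2). unfold hess_form in Hph.
  destruct H as [Hs Ha].
  assert (BA := LS_bound d g ud s0 a0 a1 (Mg + Mu) Dss s a Hs0 Ha0 HM ltac:(lra) ltac:(lra)).
  assert (BB := LS_bound d g ud s0 a0 a1 (Mg + Mu) Dsa s a Hs0 Ha0 HM ltac:(lra) ltac:(lra)).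
  assert (BC := LS_bound d g ud s0 a0 a1 (Mg + Mu) Daa s a Hs0 Ha0 HM ltac:(lra) ltac:(lra)).
  fold Bff SW in BA, BB, BC.
  set (m := Bff * SW) in *.
  set (A := LS d g ud Dss s a) in *. set (B := LS d g ud Dsa s a) in *. set (Cc := LS d g ud Daa s a) in *.
  apply Rabs_le_between in BA. apply Rabs_le_between in BB. apply Rabs_le_between in BC.
  apply (final_alg c A B Cc m); auto; lra.
Qed.
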